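(* Let $\mathbb Y$ be the stationary Markov chain on $I$ with transition matrix $Q$ and stationary law $\mu$, and $\mathbb Y^{(\mathcal K)}$ the stationary Markov chain on $I^2\times\{0,1\}$ with transition matrix $\mathcal K$ and stationary law $\zeta$. Then $$h(\mathbb Y^{(\mathcal K)})=h(\mathbb Y)+\sum_{i,j\in I}\mu(i)Q(i,j)\,H(\theta_{i,j}),$$ where $H(\theta)=-\theta\log\theta-(1-\theta)\log(1-\theta)$, and $$h(\mathbb Y^{(\mathcal K)})=-\sum_{i\in I}\mu(i)P(i,\mathcal E)\log P(i,\mathcal E)-(1-\gamma)\sum_{j\in I}\mu(j)\log\mu(j)-\sum_{i,j\in I}\mu(i)P(i,j)\log P(i,j).$$
   Context: $I$ and $\mathcal E$ are disjoint countable sets, $\mathcal E\ne\emptyset$; $P$ is a stochastic matrix on $I\cup\mathcal E$ with all $\epsilon\in\mathcal E$ absorbing, irreducible restriction $P_I$ to $I$, $\sum_{i\in I}P(i,\mathcal E)>0$ where $P(i,\mathcal E)=\sum_{\epsilon\in\mathcal E}P(i,\epsilon)$, and $\mathcal E$ reached a.s. from every $i\in I$. $\mu$ is a quasi-stationary distribution of $P_I$: a probability on $I$ with $\mu^tP_I=\gamma\mu^t$, $\gamma=\sum_{i,j\in I}\mu(i)P(i,j)\in(0,1)$ (so $\mu>0$ and $\sum_i\mu(i)P(i,\mathcal E)=1-\gamma$). $Q(i,j)=P(i,j)+P(i,\mathcal E)\mu(j)$ ($i,j\in I$) is stochastic with stationary law $\mu$; $\theta_{i,j}=P(i,j)/Q(i,j)$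 when $Q(i,j)>0$. The matrix $\mathcal K$ on $I^2\times\{0,1\}$ is $\mathcal K((i,j,a),(l,k,b))=0$ if $l\neq j$ and $\mathcal K((i,j,a),(j,k,b))=P(j,k)\mathbf 1(b=1)+P(j,\mathcal E)\mu(k)\mathbf 1(b=0)$; its stationary law is $\zeta(i,j,a)=\mu(i)P(i,j)\mathbf 1(a=1)+\mu(i)P(i,\mathcal E)\mu(j)\mathbf 1(a=0)$. For a stationary Markov chain $\mathbb Z$ with transition matrix $R$ and stationary law $\nu$, its entropy is $h(\mathbb Z)=-\sum_{a}\nu(a)\sum_bR(a,b)\log R(a,b)$ (with $0\log0=0$); in particular $h(\mathbb Y)=-\sum_{i,j\in I}\mu(i)Q(i,j)\log Q(i,j)$. *)

(* Defs.v *)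
From HB Require Import structures.
From mathcomp Require Import all_boot all_order all_algebra.
From mathcomp Require Import all_classical all_reals all_analysis.
From Stdlib Require Import Relation_Operators.
Set Implicit Arguments. Unset Strict Implicit. Unset Printing Implicit Defensive.
Import Order.TTheory GRing.Theory Num.Theory.
Local Open Scope classical_set_scope.
Local Open Scope ring_scope.

Section Defs.
Variable R : realType.

Definition negxlogx (x : R) : R := if x == 0 then 0 else - (x * ln x).

Definition Hbin (t : R) : R := negxlogx t + negxlogx (1 - t).

Definition chain_entropy (S : choiceType) (Rm : S -> S -> R) (nu : S -> R)
  : \bar R :=
  \esum_(a in [set: S]) \esum_(b in [set: S]) (nu a * negxlogx (Rm a b))%:E.

Variables (I E : countType).

Definition PtoE (P : I + E -> I + E -> R) (i : I) : R :=
  fine (\esum_(e in [set: E]) (P (inl i) (inr e))%:E).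

Definition Qmat (P : I + E -> I + E -> R) (mu : I -> R) (i j : I) : R :=
  P (inl i) (inl j) + PtoE P i * mu j.

(* theta_{i,j} = P(i,j) / Q(i,j) (only used when Q(i,j) > 0) *)
Definition theta (P : I + E -> I + E -> R) (mu : I -> R) (i j : I) : R :=
  P (inl i) (inl j) / Qmat P mu i j.

(* the matrix K on I^2 x {0,1} (b = true encodes 1) *)
Definition Kmat (P : I + E -> I + E -> R) (mu : I -> R)
  (x y : I * I * bool) : R :=
  let: (i, j, a) := x in let: (l, k, b) := y in
  if l != j then 0 else
  if b then P (inl j) (inl k) else PtoE P j * mu k.

Definition zeta (P : I + E -> I + E -> R) (mu : I -> R) (x : I * I * bool) : R :=
  let: (i, j, a) := x in
  if a then mu i * P (inl i) (inl j) else mu i * PtoE P i * mu j.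

Fixpoint Pn (P : I + E -> I + E -> R) (n : nat) (x y : I + E) : \bar R :=
  match n with
  | 0 => (if x == y then 1 else 0)%:E
  | n'.+1 => \esum_(z in [set: I + E]) (Pn P n' x z * (P z y)%:E)%E
  end.

Definition irreducible_I (P : I + E -> I + E -> R) : Prop :=
  forall i j : I,
    clos_refl_trans I (fun a b => 0 < P (inl a) (inl b)) i j.

(* E is reached almost surely from i: since E is absorbing, the probability
   P^n(i, E) of being in E at time n increases to the hitting probability *)
Definition reaches_E_as (P : I + E -> I + E -> R) (i : I) : Prop :=
  (fun n => \esum_(e in [set: E]) Pn P n (inl i) (inr e)) @ \oo --> 1%E.

End Defs.

(* Main.v *)
Require Import Defs.
From HB Require Import structures.
From mathcomp Require Import all_boot all_order all_algebra.
From mathcomp Require Import all_classical all_reals all_analysis.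
From mathcomp Require Import ring lra.
Import Order.TTheory GRing.Theory Num.Theory.
Local Open Scope classical_set_scope.
Local Open Scope ring_scope.

Section helpers.
Variable R : realType.
Local Open Scope ereal_scope.

Lemma esumZl (T : choiceType) (S : set T) (c : R) (a : T -> \bar R) :
  (0 <= c)%R -> (forall i, 0 <= a i) ->
  \esum_(i in S) (c%:E * a i) = c%:E * \esum_(i in S) a i.
Proof.
move=> c0 a0; rewrite /esum -ereal_supZl //; last first.
  by apply/set0P; exists (\sum_(x \in set0) a x); exists set0 => //; exact: fsets_set0.
rewrite image_comp; congr ereal_sup; apply: eq_imagel => A _ /=.
by rewrite ge0_mule_fsumr.
Qed.

Lemma esumZr (T : choiceType) (S : set T) (c : R) (a : T -> \bar R) :
  (0 <= c)%R -> (forall i, 0 <= a i) ->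
  \esum_(i in S) (a i * c%:E) = (\esum_(i in S) a i) * c%:E.
Proof.
move=> c0 a0; rewrite muleC -esumZl//; apply: eq_esum => i _; exact: muleC.
Qed.

Lemma esum_only (T : choiceType) (j : T) (f : T -> \bar R) :
  (forall x, x <> j -> f x = 0) -> 0 <= f j ->
  \esum_(x in [set: T]) f x = f j.
Proof.
move=> fz fj; have f0 : forall x, [set: T] x -> 0 <= f x.
  by move=> x _; case: (pselect (x = j)) => [->//|/fz ->].
rewrite (esumID [set j]) // setTI esum_set1 // esum1 ?adde0 //.
by move=> x [_ /= xj]; exact: fz.
Qed.

Lemma esum_bool (f : bool -> \bar R) : 0 <= f true -> 0 <= f false ->
  \esum_(x in [set: bool]) f x = f true + f false.
Proof.
move=> ft ff; rewrite (esumID [set true]); last by move=> [].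
rewrite setTI esum_set1 //; congr (_ + _).
rewrite (_ : _ `&` _ = [set false]) ?esum_set1 //.
by apply/seteqP; split => [[] [_ /=]|[] /=] //; split.
Qed.

Lemma esum_pair (T1 T2 : choiceType) (f : T1 * T2 -> \bar R) :
  (forall x, 0 <= f x) ->
  \esum_(x in [set: T1 * T2]) f x = \esum_(a in [set: T1]) \esum_(b in [set: T2]) f (a, b).
Proof.
move=> f0; rewrite esum_esum //.
rewrite (_ : [set: T1] `*`` (fun=> [set: T2]) = [set: T1 * T2]).
  by apply: eq_esum => -[].
by apply/seteqP; split.
Qed.

Lemma esum_swap (T1 T2 : choiceType) (f : T1 -> T2 -> \bar R) :
  (forall a b, 0 <= f a b) ->
  \esum_(a in [set: T1]) \esum_(b in [set: T2]) f a b =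
  \esum_(b in [set: T2]) \esum_(a in [set: T1]) f a b.
Proof.
move=> f0; rewrite -(@esum_pair _ _ (fun x => f x.1 x.2)) //.
rewrite -(@esum_pair _ _ (fun x => f x.2 x.1)) //.
rewrite (reindex_esum [set: T2 * T1] [set: T1 * T2] (fun x => (x.2, x.1))) //.
split=> //=.
- by move=> [? ?] [? ?] _ _ [-> ->].
- by move=> [i j] _; exists (j, i).
Qed.

Lemma esum_sum2 (T1 T2 : choiceType) (f : T1 + T2 -> \bar R) :
  (forall x, 0 <= f x) ->
  \esum_(x in [set: T1 + T2]) f x =
  \esum_(a in [set: T1]) f (inl a) + \esum_(b in [set: T2]) f (inr b).
Proof.
move=> f0; rewrite (esumID (range inl)) //; congr (_ + _).
  rewrite setTI esum_image //; by move=> ? ? _ _ [].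
rewrite (_ : _ `&` _ = inr @` setT).
  rewrite esum_image //; by move=> ? ? _ _ [].
apply/seteqP; split => [[x|x] [_ /=]|x [y _ <-]] //=.
- by move=> h; exfalso; apply: h; exists x.
- by exists x.
- by split => // -[z _].
Qed.

End helpers.

Section more.
Variable R : realType.
Local Open Scope ereal_scope.
Lemma term_le_esum (T : choiceType) (a : T -> \bar R) k :
  (forall x, 0 <= a x) -> a k <= \esum_(x in [set: T]) a x.
Proof.
move=> a0; apply: esum_ge; exists [set k]; first by split => //; exact: finite_set1.
by rewrite fsbig_set1.
Qed.
End more.

Section nlx.
Variable R : realType.

Lemma nlx0 : negxlogx (0 : R) = 0.
Proof. by rewrite /negxlogx eqxx. Qed.

Lemma nlx_ge0 (x : R) : 0 <= x -> x <= 1 -> 0 <= negxlogx x.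
Proof.
move=> x0 x1; rewrite /negxlogx; case: eqP => // _.
by rewrite oppr_ge0 mulr_ge0_le0 // ln_le0.
Qed.

Lemma nlxM (a b : R) : 0 <= a -> 0 <= b ->
  negxlogx (a * b) = a * negxlogx b + b * negxlogx a.
Proof.
rewrite /negxlogx le0r => /orP[/eqP->|a0]; first by rewrite ?(mulr0, mul0r, eqxx, addr0, add0r).
rewrite le0r => /orP[/eqP->|b0]; first by rewrite ?(mulr0, mul0r, eqxx, addr0, add0r).
rewrite mulf_eq0 !gt_eqF // lnM ?posrE //=; ring.
Qed.

Lemma nlx_scale (x s : R) : 0 <= x -> 0 < s ->
  s * negxlogx (x / s) = negxlogx x + x * ln s.
Proof.
rewrite /negxlogx le0r => /orP[/eqP->|x0] s0; first by rewrite ?(mulr0, mul0r, eqxx, addr0, add0r).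
rewrite mulf_eq0 invr_eq0 !gt_eqF // lnM ?posrE ?invr_gt0 // lnV ?posrE //=.
by field; rewrite gt_eqF.
Qed.

Lemma nlx_group (p q : R) : 0 <= p -> 0 <= q -> 0 < p + q ->
  negxlogx p + negxlogx q = negxlogx (p + q) + (p + q) * Hbin (p / (p + q)).
Proof.
move=> p0 q0 s0; rewrite /Hbin mulrDr nlx_scale //.
have -> : 1 - p / (p + q) = q / (p + q) by field; rewrite gt_eqF.
rewrite nlx_scale // /negxlogx (gt_eqF s0); ring.
Qed.

Lemma Hbin_ge0 (t : R) : 0 <= t -> t <= 1 -> 0 <= Hbin t.
Proof.
move=> t0 t1; rewrite /Hbin addr_ge0 //; apply: nlx_ge0; lra.
Qed.

End nlx.

Theorem proposition3 (R : realType) (I E : countType)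
  (P : I + E -> I + E -> R) (mu : I -> R) (gamma : R)
  (* E nonempty *)
  (hE : exists e : E, True)
  (* P stochastic *)
  (hP0 : forall x y, 0 <= P x y)
  (hP1 : forall x, \esum_(y in [set: I + E]) (P x y)%:E = 1%E)
  (* every epsilon in E absorbing *)
  (habs : forall e : E, P (inr e) (inr e) = 1)
  (* P_I irreducible *)
  (hirr : irreducible_I P)
  (* sum_i P(i, E) > 0 *)
  (hPE : (0 < \esum_(i in [set: I]) (PtoE P i)%:E)%E)
  (* E reached a.s. from every i *)
  (hreach : forall i : I, reaches_E_as P i)
  (* mu a probability on I *)
  (hmu0 : forall i, 0 <= mu i)
  (hmu1 : \esum_(i in [set: I]) (mu i)%:E = 1%E)
  (* gamma = sum_{i,j} mu(i) P(i,j), in (0,1) *)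
  (hgamma : \esum_(i in [set: I]) \esum_(j in [set: I])
              (mu i * P (inl i) (inl j))%:E = gamma%:E)
  (hgamma01 : 0 < gamma < 1)
  (* quasi-stationarity: mu^t P_I = gamma mu^t *)
  (hqsd : forall j : I,
     \esum_(i in [set: I]) (mu i * P (inl i) (inl j))%:E = (gamma * mu j)%:E) :
  chain_entropy (Kmat P mu) (zeta P mu)
    = (chain_entropy (Qmat P mu) mu
       + \esum_(i in [set: I]) \esum_(j in [set j | (0 < Qmat P mu i j)%R])
           (mu i * Qmat P mu i j * Hbin (theta P mu i j))%:E)%E
  /\
  chain_entropy (Kmat P mu) (zeta P mu)
    = (\esum_(i in [set: I]) (mu i * negxlogx (PtoE P i))%:E
       + ((1 - gamma)%:E * (\esum_(j in [set: I]) (negxlogx (mu j))%:E))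
       + \esum_(i in [set: I]) \esum_(j in [set: I])
           (mu i * negxlogx (P (inl i) (inl j)))%:E)%E.
Proof.
set p := fun j k => P (inl j) (inl k).
set e := PtoE P.
have p0 j k : 0 <= p j k by exact: hP0.
have row j : (\esum_(k in [set: I]) (p j k)%:E + (e j)%:E = 1)%E.
  have := hP1 (inl j); rewrite esum_sum2; last by move=> y; rewrite lee_fin.
  set A := esum _ _; set B := esum _ _ => hAB.
  have A0 : (0 <= A)%E by apply: esum_ge0 => y _; rewrite lee_fin.
  have B0 : (0 <= B)%E by apply: esum_ge0 => y _; rewrite lee_fin.
  have Bfin : B \is a fin_num.
    rewrite ge0_fin_numE // (le_lt_trans (y := 1%E)) ?ltry //.
    by rewrite -hAB leeDr.
  by rewrite /e /PtoE -/B fineK.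
have e0 j : 0 <= e j.
  rewrite /e /PtoE; apply: fine_ge0; apply: esum_ge0 => y _; rewrite lee_fin; exact: hP0.
have pe1 j k : p j k + e j <= 1.
  rewrite -lee_fin -(row j) EFinD leeD2r //.
  by apply: (@term_le_esum _ _ (fun k => (p j k)%:E)) => x; rewrite lee_fin.
have p1 j k : p j k <= 1 by have := pe1 j k; have := e0 j; lra.
have e1 j : e j <= 1 by have := pe1 j j; have := p0 j j; lra.
have mu1 j : mu j <= 1.
  rewrite -lee_fin -hmu1.
  by apply: (@term_le_esum _ _ (fun k => (mu k)%:E)) => x; rewrite lee_fin.

have mu0 := hmu0.
have F4 : (\esum_(i in [set: I]) (mu i * e i)%:E = (1 - gamma)%:E)%E.
  have hS : (gamma%:E + \esum_(i in [set: I]) (mu i * e i)%:E = 1%:E)%E.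
    rewrite -hmu1 -hgamma -esumD; last 2 first.
    - by move=> i _; apply: esum_ge0 => j _; rewrite lee_fin mulr_ge0.
    - by move=> i _; rewrite lee_fin mulr_ge0.
    apply: eq_esum => i _.
    rewrite -[(mu i)%:E]mule1 -(row i) ge0_muleDr; last 2 first.
    - by apply: esum_ge0 => k _; rewrite lee_fin.
    - by rewrite lee_fin.
    rewrite -esumZl //; last by move=> k; rewrite lee_fin.
  have S0 : (0 <= \esum_(i in [set: I]) (mu i * e i)%:E)%E.
    by apply: esum_ge0 => i _; rewrite lee_fin mulr_ge0.
  move: hS S0; case: (esum _ _) => [r||] //.
  by rewrite -EFinD => -[h] _; congr EFin; lra.
have F5 j : (\esum_(i in [set: I]) (mu i * p i j + mu i * e i * mu j)%:E = (mu j)%:E)%E.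
  under eq_esum do rewrite EFinD.
  rewrite esumD; last 2 first.
  - by move=> i _; rewrite lee_fin mulr_ge0.
  - by move=> i _; rewrite lee_fin !mulr_ge0.
  rewrite hqsd.
  under eq_esum do rewrite EFinM.
  rewrite esumZr //; last by move=> i; rewrite lee_fin mulr_ge0.
  by rewrite F4 -EFinM -EFinD; congr EFin; ring.

set f := fun j k => negxlogx (p j k) + negxlogx (e j * mu k).
have f0 j k : 0 <= f j k.
  rewrite /f addr_ge0 //; apply: nlx_ge0; rewrite ?mulr_ge0 //.
  exact: mulr_ile1.
have z0 a : 0 <= zeta P mu a.
  by case: a => -[i j] [] /=; rewrite !mulr_ge0.
have zK0 a b : (0 <= (zeta P mu a * negxlogx (Kmat P mu a b))%:E)%E.
  rewrite lee_fin mulr_ge0 //; case: a b => -[i j] s [[l k] t] /=.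
  case: ifP => _; first by rewrite nlx0.
  case: t; apply: nlx_ge0 => //; rewrite ?mulr_ge0 //; first exact: p1.
  exact: mulr_ile1.
have A1 a : \esum_(b in [set: I * I * bool]) (zeta P mu a * negxlogx (Kmat P mu a b))%:E
    = \esum_(k in [set: I]) (zeta P mu a * f a.1.2 k)%:E.
  rewrite esum_pair // esum_pair; last by move=> x; apply: esum_ge0 => y _.
  rewrite (@esum_only _ _ a.1.2); last 2 first.
  - move=> l hl; apply: esum1 => k _; apply: esum1 => t _.
    case: a hl => -[i j] s /= /eqP hl; by rewrite hl nlx0 mulr0.
  - by apply: esum_ge0 => k _; apply: esum_ge0.
  apply: eq_esum => k _; rewrite esum_bool //.
  case: a => -[i j] s /=; rewrite eqxx /= -EFinD -mulrDr.
  by [].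

have A2 : chain_entropy (Kmat P mu) (zeta P mu) =
    (\esum_(j in [set: I]) \esum_(k in [set: I]) (mu j * f j k)%:E)%E.
  rewrite /chain_entropy (eq_esum (fun a _ => A1 a)).
  rewrite esum_pair; last by move=> x; apply: esum_ge0 => k _; rewrite lee_fin mulr_ge0.
  set zz := fun x : I * I => zeta P mu (x, true) + zeta P mu (x, false).
  have zz0 x : 0 <= zz x by rewrite addr_ge0.
  transitivity (\esum_(x in [set: I * I]) \esum_(k in [set: I]) (zz x * f x.2 k)%:E)%E.
    apply: eq_esum => x _; rewrite esum_bool; last 2 first.
    - by apply: esum_ge0 => k _; rewrite lee_fin mulr_ge0.
    - by apply: esum_ge0 => k _; rewrite lee_fin mulr_ge0.
    rewrite -esumD; last 2 first.
    - by move=> k _; rewrite lee_fin mulr_ge0.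
    - by move=> k _; rewrite lee_fin mulr_ge0.
    by apply: eq_esum => k _; rewrite -EFinD -mulrDl.
  rewrite (@esum_pair _ _ _ (fun x => \esum_(k in [set: I]) (zz x * f x.2 k)%:E)%E); last first.
    by move=> x; apply: esum_ge0 => k _; rewrite lee_fin mulr_ge0.
  rewrite esum_swap; last first.
    by move=> ? ?; apply: esum_ge0 => k _; rewrite lee_fin mulr_ge0.
  apply: eq_esum => j _; rewrite esum_swap; last first.
    by move=> ? ?; rewrite lee_fin mulr_ge0.
  apply: eq_esum => k _.
  rewrite (eq_esum (b := fun i => ((zz (i, j))%:E * (f j k)%:E)%E)) //.
  rewrite esumZr //; last by move=> ?; rewrite lee_fin.
  by rewrite EFinM -(F5 j).


have nmu0 k : 0 <= negxlogx (mu k) by apply: nlx_ge0.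
have ne0 j : 0 <= negxlogx (e j) by apply: nlx_ge0.
have np0 j k : 0 <= negxlogx (p j k) by apply: nlx_ge0.
have nem0 j k : 0 <= negxlogx (e j * mu k).
  by apply: nlx_ge0; rewrite ?mulr_ge0 // mulr_ile1.
have B1 : (\esum_(j in [set: I]) \esum_(k in [set: I]) (mu j * f j k)%:E =
   \esum_(j in [set: I]) \esum_(k in [set: I]) (mu j * negxlogx (p j k))%:E +
   \esum_(j in [set: I]) \esum_(k in [set: I]) (mu j * negxlogx (e j * mu k))%:E)%E.
  rewrite -esumD; last 2 first.
  - by move=> j _; apply: esum_ge0 => k _; rewrite lee_fin mulr_ge0.
  - by move=> j _; apply: esum_ge0 => k _; rewrite lee_fin mulr_ge0.
  apply: eq_esum => j _; rewrite -esumD; last 2 first.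
  - by move=> k _; rewrite lee_fin mulr_ge0.
  - by move=> k _; rewrite lee_fin mulr_ge0.
  by apply: eq_esum => k _; rewrite -EFinD -mulrDr.
have B2 : (\esum_(j in [set: I]) \esum_(k in [set: I]) (mu j * negxlogx (e j * mu k))%:E =
   \esum_(j in [set: I]) (mu j * negxlogx (e j))%:E +
   (1 - gamma)%:E * \esum_(k in [set: I]) (negxlogx (mu k))%:E)%E.
  have E1 j : (\esum_(k in [set: I]) (mu j * negxlogx (e j * mu k))%:E =
     \esum_(k in [set: I]) ((mu j * e j)%:E * (negxlogx (mu k))%:E) +
     \esum_(k in [set: I]) ((mu k)%:E * (mu j * negxlogx (e j))%:E))%E.
    rewrite -esumD; last 2 first.
    - by move=> k _; rewrite -EFinM lee_fin !mulr_ge0.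
    - by move=> k _; rewrite -EFinM lee_fin !mulr_ge0.
    apply: eq_esum => k _; rewrite -!EFinM -EFinD nlxM //; congr EFin; ring.
  rewrite (eq_esum (fun j _ => E1 j)) esumD; last 2 first.
  - by move=> j _; apply: esum_ge0 => k _; rewrite -EFinM lee_fin !mulr_ge0.
  - by move=> j _; apply: esum_ge0 => k _; rewrite -EFinM lee_fin !mulr_ge0.
  rewrite addeC; congr (_ + _).
    apply: eq_esum => j _; rewrite esumZr ?hmu1 ?mul1e // ?mulr_ge0 //.
  rewrite esum_swap; last by move=> ? ?; rewrite -EFinM lee_fin !mulr_ge0.
  rewrite -esumZl; last 2 first.
  - by rewrite subr_ge0; case/andP: hgamma01 => _ /ltW.
  - by move=> k; rewrite lee_fin.
  apply: eq_esum => k _; rewrite esumZr ?F4 //.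
  by move=> j; rewrite lee_fin mulr_ge0.
split; rewrite A2; last first.
  rewrite B1 B2 addeC.
  by [].
have nQ0 j k : 0 <= negxlogx (Qmat P mu j k).
  apply: nlx_ge0; rewrite /Qmat; first by rewrite addr_ge0 ?mulr_ge0.
  apply: le_trans (pe1 j k); rewrite lerD2l -[X in _ <= X]mulr1.
  by rewrite ler_wpM2l.
have th01 j k : 0 < Qmat P mu j k -> 0 <= theta P mu j k <= 1.
  move=> hQ; rewrite /theta divr_ge0 ?ler_pdivrMr ?mul1r //=; last exact: ltW.
  by rewrite /Qmat lerDl mulr_ge0.
rewrite /chain_entropy -esumD; last 2 first.
- by move=> j _; apply: esum_ge0 => k _; rewrite lee_fin mulr_ge0.
- move=> j _; apply: esum_ge0 => k hk; rewrite lee_fin !mulr_ge0 //.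
    by apply: ltW.
  by case/andP: (th01 _ _ hk) => ? ?; apply: Hbin_ge0.
apply: eq_esum => j _; rewrite [X in (_ + X)%E]esum_mkcond -esumD; last 2 first.
- by move=> k _; rewrite lee_fin mulr_ge0.
- move=> k _; case: ifPn => // /set_mem /= hk; rewrite lee_fin !mulr_ge0 //.
    by apply: ltW.
  by case/andP: (th01 _ _ hk) => ? ?; apply: Hbin_ge0.
apply: eq_esum => k _.
have q0 : 0 <= PtoE P j * mu k by rewrite mulr_ge0.
case: (boolP (0 < Qmat P mu j k)) => hQ.
  rewrite mem_set // -EFinD; congr EFin.
  have := @nlx_group R _ _ (p0 j k) q0 hQ.
  rewrite /f /p /e /theta /Qmat => ->; ring.
rewrite memNset; last by move=> /= h; rewrite h in hQ.
have hQ0 : Qmat P mu j k = 0.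
  by apply/eqP; rewrite eq_le leNgt hQ /Qmat addr_ge0.
have [hp hq] : p j k = 0 /\ PtoE P j * mu k = 0.
  move: hQ0; rewrite /Qmat /p => h; have := p0 j k; rewrite /p => h2; split; lra.
rewrite adde0 hQ0 /f /e hp hq !nlx0; congr EFin; ring.
Qed.
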